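(* Let $\mathcal{Q}$ be either the category of unital involutive quantales with unital involutive homomorphisms or the category of strong involutive quantales with strong involutive homomorphisms. Let $\{L_i\}_i$ be a family of locales such that all but at most one of the $L_i$ are regular. Then the coproduct $\coprod_i L_i$ in $\mathcal{Q}$ is calculated in the category of locales, i.e. it is a locale (and hence coincides with the coproduct in the category of locales).
   Context: A quantale is a complete lattice with an associative multiplication distributing over arbitrary joins in both variables; $1$ is its top. It is unital if it has a multiplicative unit, strong if $1\cdot 1=1$. An involutive quantale has an involution $^*$ with $a^{**}=a$, $(a\cdot b)^*=b^*\cdot a^*$, $(\bigvee a_i)^*=\bigvee a_i^*$. Homomorphisms preserve joins and multiplication; unital ones preserve the unit, strong ones the top, involutive ones the involution. A locale is a complete lattice satisfying $a\wedge\bigvee_i b_i=\bigvee_i(a\wedge b_i)$, regarded as a unital involutive quantale with multiplication $\wedge$, unit the top, trivial involution; locale homomorphisms preserve joins, finite meets and top. A locale $L$ is regular if every $a\in L$ equals $\bigvee\{a'\in L: a'\prec a\}$, where $a'\prec a$ means there is $b\in L$ with $a'\wedge b=0$ and $a\vee b=1$. *)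

(* Defs.v *)
Definition img {A B : Type} (f : A -> B) (S : A -> Prop) : B -> Prop :=
  fun y => exists x, S x /\ y = f x.

Record InvQuantale := {
  qcar :> Type;
  qle : qcar -> qcar -> Prop;
  qsup : (qcar -> Prop) -> qcar;
  qmul : qcar -> qcar -> qcar;
  qinv : qcar -> qcar;
  qle_refl : forall a, qle a a;
  qle_antisym : forall a b, qle a b -> qle b a -> a = b;
  qle_trans : forall a b c, qle a b -> qle b c -> qle a c;
  qsup_ub : forall (S : qcar -> Prop) a, S a -> qle a (qsup S);
  qsup_least : forall (S : qcar -> Prop) b, (forall a, S a -> qle a b) -> qle (qsup S) b;
  qmul_assoc : forall a b c, qmul a (qmul b c) = qmul (qmul a b) c;
  qmul_supr : forall a (S : qcar -> Prop), qmul a (qsup S) = qsup (img (qmul a) S);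
  qmul_supl : forall a (S : qcar -> Prop), qmul (qsup S) a = qsup (img (fun x => qmul x a) S);
  qinv_inv : forall a, qinv (qinv a) = a;
  qinv_mul : forall a b, qinv (qmul a b) = qmul (qinv b) (qinv a);
  qinv_sup : forall (S : qcar -> Prop), qinv (qsup S) = qsup (img qinv S)
}.

Arguments qle {_} _ _.
Arguments qsup {_} _.
Arguments qmul {_} _ _.
Arguments qinv {_} _.

Definition qtop (Q : InvQuantale) : Q := qsup (fun _ : Q => True).
Definition qbot (Q : InvQuantale) : Q := qsup (fun _ : Q => False).
Definition qjoin {Q : InvQuantale} (a b : Q) : Q := qsup (fun x => x = a \/ x = b).
Definition qmeet {Q : InvQuantale} (a b : Q) : Q := qsup (fun x => qle x a /\ qle x b).

Definition is_unit (Q : InvQuantale) (e : Q) : Prop :=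
  forall a : Q, qmul e a = a /\ qmul a e = a.

Inductive qkind := UnitalInv | StrongInv.

Definition is_obj (k : qkind) (Q : InvQuantale) : Prop :=
  match k with
  | UnitalInv => exists e : Q, is_unit Q e
  | StrongInv => qmul (qtop Q) (qtop Q) = qtop Q
  end.

Definition is_hom (k : qkind) (Q R : InvQuantale) (f : Q -> R) : Prop :=
  (forall S : Q -> Prop, f (qsup S) = qsup (img f S)) /\
  (forall a b : Q, f (qmul a b) = qmul (f a) (f b)) /\
  (forall a : Q, f (qinv a) = qinv (f a)) /\
  match k with
  | UnitalInv => forall (e : Q) (e' : R), is_unit Q e -> is_unit R e' -> f e = e'
  | StrongInv => f (qtop Q) = qtop R
  end.

(* An involutive quantale "is a locale": multiplication is binary meet and
   the involution is trivial (a locale regarded as a unital involutive quantale). *)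
Definition is_locale (Q : InvQuantale) : Prop :=
  (forall a b : Q, qmul a b = qmeet a b) /\ (forall a : Q, qinv a = a).

Definition well_inside {Q : InvQuantale} (a' a : Q) : Prop :=
  exists b : Q, qmeet a' b = qbot Q /\ qjoin a b = qtop Q.

Definition regular (Q : InvQuantale) : Prop :=
  forall a : Q, a = qsup (fun a' => well_inside a' a).

Definition is_coproduct (k : qkind) {I : Type} (L : I -> InvQuantale)
  (C : InvQuantale) (inj : forall i, L i -> C) : Prop :=
  is_obj k C /\
  (forall i, is_hom k (L i) C (inj i)) /\
  (forall (Y : InvQuantale) (f : forall i, L i -> Y),
     is_obj k Y -> (forall i, is_hom k (L i) Y (f i)) ->
     exists h : C -> Y,
       is_hom k C Y h /\ (forall i (x : L i), h (inj i x) = f i x) /\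
       (forall h' : C -> Y, is_hom k C Y h' ->
          (forall i (x : L i), h' (inj i x) = f i x) -> forall c, h' c = h c)).

(* Main.v *)
Require Import Defs.
From Stdlib Require Import Classical ProofIrrelevance.

Lemma sup_ext (Q : InvQuantale) (S T : Q -> Prop) :
  (forall x, S x <-> T x) -> qsup S = qsup T.
Proof. intros H; apply qle_antisym; apply qsup_least; intros a Ha; apply qsup_ub; apply H; auto. Qed.

Lemma sup_pair (Q : InvQuantale) (a b : Q) : qle a b -> qsup (fun x => x = a \/ x = b) = b.
Proof.
  intros H; apply qle_antisym.
  - apply qsup_least; intros x [->| ->]; auto using qle_refl.
  - apply qsup_ub; auto.
Qed.

Lemma mul_monol (Q : InvQuantale) (a a' b : Q) : qle a a' -> qle (qmul a b) (qmul a' b).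
Proof. intros H. rewrite <- (sup_pair Q a a' H). rewrite qmul_supl. apply qsup_ub. exists a; auto. Qed.

Lemma mul_monor (Q : InvQuantale) (a b b' : Q) : qle b b' -> qle (qmul a b) (qmul a b').
Proof. intros H. rewrite <- (sup_pair Q b b' H). rewrite qmul_supr. apply qsup_ub. exists b; auto. Qed.

Lemma inv_mono (Q : InvQuantale) (a b : Q) : qle a b -> qle (qinv a) (qinv b).
Proof. intros H. rewrite <- (sup_pair Q a b H). rewrite qinv_sup. apply qsup_ub. exists a; auto. Qed.

Lemma hom_mono (Q R : InvQuantale) (f : Q -> R) (x y : Q) :
  (forall S, f (qsup S) = qsup (img f S)) -> qle x y -> qle (f x) (f y).
Proof. intros Hf H. rewrite <- (sup_pair Q x y H). rewrite Hf. apply qsup_ub. exists x; auto. Qed.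

Lemma bot_least (Q : InvQuantale) (a : Q) : qle (qbot Q) a.
Proof. unfold qbot; apply qsup_least; intros; contradiction. Qed.

Lemma qjoin_least (Q : InvQuantale) (a b c : Q) : qle a c -> qle b c -> qle (qjoin a b) c.
Proof. intros; unfold qjoin; apply qsup_least; intros x [->| ->]; auto. Qed.

Lemma mul_join_l (Q : InvQuantale) (a b c : Q) : qmul (qjoin a b) c = qjoin (qmul a c) (qmul b c).
Proof.
  unfold qjoin. rewrite qmul_supl. apply sup_ext. intro x; split.
  - intros [y [[-> | ->] ->]]; [left|right]; reflexivity.
  - intros [-> | ->]; eexists; split; [left; reflexivity| reflexivity | right; reflexivity | reflexivity].
Qed.

Lemma mul_join_r (Q : InvQuantale) (a b c : Q) : qmul c (qjoin a b) = qjoin (qmul c a) (qmul c b).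
Proof.
  unfold qjoin. rewrite qmul_supr. apply sup_ext. intro x; split.
  - intros [y [[-> | ->] ->]]; [left|right]; reflexivity.
  - intros [-> | ->]; eexists; split; [left; reflexivity| reflexivity | right; reflexivity | reflexivity].
Qed.

Lemma hom_join (Q R : InvQuantale) (f : Q -> R) (a b : Q) :
  (forall S, f (qsup S) = qsup (img f S)) -> f (qjoin a b) = qjoin (f a) (f b).
Proof.
  intros Hf. unfold qjoin. rewrite Hf. apply sup_ext. intro x; split.
  - intros [y [[-> | ->] ->]]; [left|right]; reflexivity.
  - intros [-> | ->]; eexists; split; [left; reflexivity| reflexivity | right; reflexivity | reflexivity].
Qed.

Lemma hom_bot (Q R : InvQuantale) (f : Q -> R) :
  (forall S, f (qsup S) = qsup (img f S)) -> f (qbot Q) = qbot R.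
Proof.
  intros Hf. unfold qbot. rewrite Hf. apply sup_ext. intro x; split.
  - intros [y [[] _]].
  - intros [].
Qed.

Lemma meet_comm (Q : InvQuantale) (a b : Q) : qmeet a b = qmeet b a.
Proof. unfold qmeet; apply sup_ext; tauto. Qed.

Lemma meet_top_r (Q : InvQuantale) (a : Q) : qmeet a (qtop Q) = a.
Proof.
  apply qle_antisym.
  - apply qsup_least; intros x [H _]; exact H.
  - apply qsup_ub; split; [apply qle_refl | apply qsup_ub; exact I].
Qed.

Lemma meet_idem (Q : InvQuantale) (a : Q) : qmeet a a = a.
Proof.
  apply qle_antisym.
  - apply qsup_least; intros x [H _]; exact H.
  - apply qsup_ub; split; apply qle_refl.
Qed.

Lemma unit_unique (Q : InvQuantale) (e e' : Q) : is_unit Q e -> is_unit Q e' -> e = e'.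
Proof.
  intros H H'. destruct (H e') as [H1 _]. destruct (H' e) as [_ H2]. congruence.
Qed.

Lemma unit_inv (Q : InvQuantale) (e : Q) : is_unit Q e -> qinv e = e.
Proof.
  intros H. apply unit_unique; auto. intro a; split.
  - rewrite <- (qinv_inv Q a) at 1. rewrite <- qinv_mul. destruct (H (qinv a)) as [_ ->]. apply qinv_inv.
  - rewrite <- (qinv_inv Q a) at 1. rewrite <- qinv_mul. destruct (H (qinv a)) as [-> _]. apply qinv_inv.
Qed.

Lemma locale_top_unit (Q : InvQuantale) : is_locale Q -> is_unit Q (qtop Q).
Proof.
  intros [Hm _] a. rewrite !Hm. rewrite meet_comm, meet_top_r. auto.
Qed.

Lemma top_inv (Q : InvQuantale) : qinv (qtop Q) = qtop Q.
Proof.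
  unfold qtop. rewrite qinv_sup. apply sup_ext. intro x; split; auto.
  intros _. exists (qinv x). split; auto. symmetry; apply qinv_inv.
Qed.

Lemma comm_aux (Q : InvQuantale) (e u v w X : Q) :
 qle X e -> qmul X e = X -> qmul e X = X ->
 qle u e -> qmul u e = u -> qmul e u = u -> qmul v e = v -> qmul e v = v ->
 qmul u v = qbot Q -> qmul v u = qbot Q -> qjoin w v = e ->
 qle (qmul u X) (qmul X w) /\ qle (qmul X u) (qmul w X).
Proof.
  intros HX HXe HeX Hu Hue Heu Hve Hev Huv Hvu Hwv. split.
  - assert (H1 : qmul u X = qjoin (qmul (qmul u X) w) (qmul (qmul u X) v)).
    { rewrite <- mul_join_r, Hwv, <- qmul_assoc, HXe. reflexivity. }
    assert (H2 : qle (qmul (qmul u X) v) (qbot Q)).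
    { rewrite <- Huv. apply qle_trans with (qmul (qmul u e) v).
      - apply mul_monol, mul_monor, HX.
      - rewrite Hue; apply qle_refl. }
    assert (H3 : qle (qmul (qmul u X) w) (qmul X w)).
    { rewrite <- HeX at 2. apply mul_monol, mul_monol, Hu. }
    rewrite H1 at 1. apply qjoin_least; auto.
    eapply qle_trans; [exact H2 | apply bot_least].
  - assert (H1 : qmul X u = qjoin (qmul w (qmul X u)) (qmul v (qmul X u))).
    { rewrite <- mul_join_l, Hwv, qmul_assoc, HeX. reflexivity. }
    assert (H2 : qle (qmul v (qmul X u)) (qbot Q)).
    { rewrite <- Hvu. apply qle_trans with (qmul v (qmul e u)).
      - apply mul_monor, mul_monol, HX.
      - rewrite Heu; apply qle_refl. }
    assert (H3 : qle (qmul w (qmul X u)) (qmul w X)).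
    { rewrite <- HXe at 2. apply mul_monor, mul_monor, Hu. }
    rewrite H1 at 1. apply qjoin_least; auto.
    eapply qle_trans; [exact H2 | apply bot_least].
Qed.

Lemma sig_eq (Q : Type) (D : Q -> Prop) (a b : {x | D x}) :
  proj1_sig a = proj1_sig b -> a = b.
Proof. destruct a, b; simpl; intros ->; f_equal; apply proof_irrelevance. Qed.

Lemma sub_img_D (Q : Type) (D : Q -> Prop) (S : {x | D x} -> Prop) :
  forall y, img (@proj1_sig Q D) S y -> D y.
Proof. intros y [d [_ ->]]. exact (proj2_sig d). Qed.

Definition subQ (Q : InvQuantale) (D : Q -> Prop)
  (Dsup : forall S : Q -> Prop, (forall x, S x -> D x) -> D (qsup S))
  (Dmul : forall a b, D a -> D b -> D (qmul a b))
  (Dinv : forall a, D a -> D (qinv a)) : InvQuantale.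
Proof.
  refine (Build_InvQuantale {x : Q | D x}
    (fun a b => qle (proj1_sig a) (proj1_sig b))
    (fun S => exist D (qsup (img (@proj1_sig Q D) S)) (Dsup _ (sub_img_D Q D S)))
    (fun a b => exist D (qmul (proj1_sig a) (proj1_sig b)) (Dmul _ _ (proj2_sig a) (proj2_sig b)))
    (fun a => exist D (qinv (proj1_sig a)) (Dinv _ (proj2_sig a)))
    _ _ _ _ _ _ _ _ _ _ _); simpl.
  - intros; apply qle_refl.
  - intros a b H1 H2; apply sig_eq; apply qle_antisym; auto.
  - intros a b c; apply qle_trans.
  - intros S a H; apply qsup_ub; exists a; auto.
  - intros S b H; apply qsup_least; intros y [d [Hd ->]]; auto.
  - intros a b c; apply sig_eq; simpl; apply qmul_assoc.
  - intros a S; apply sig_eq; simpl. rewrite qmul_supr. apply sup_ext. intro y; split.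
    + intros [z [[d [Hd ->]] ->]]. eexists; split; [eexists; split; [exact Hd | reflexivity] | reflexivity].
    + intros [z [[d [Hd ->]] ->]]. simpl. eexists; split; [eexists; split; [exact Hd | reflexivity] | reflexivity].
  - intros a S; apply sig_eq; simpl. rewrite qmul_supl. apply sup_ext. intro y; split.
    + intros [z [[d [Hd ->]] ->]]. eexists; split; [eexists; split; [exact Hd | reflexivity] | reflexivity].
    + intros [z [[d [Hd ->]] ->]]. simpl. eexists; split; [eexists; split; [exact Hd | reflexivity] | reflexivity].
  - intros a; apply sig_eq; simpl; apply qinv_inv.
  - intros a b; apply sig_eq; simpl; apply qinv_mul.
  - intros S; apply sig_eq; simpl. rewrite qinv_sup. apply sup_ext. intro y; split.
    + intros [z [[d [Hd ->]] ->]]. eexists; split; [eexists; split; [exact Hd | reflexivity] | reflexivity].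
    + intros [z [[d [Hd ->]] ->]]. simpl. eexists; split; [eexists; split; [exact Hd | reflexivity] | reflexivity].
Defined.

Lemma generation (k : qkind) (I : Type) (L : I -> InvQuantale)
  (C : InvQuantale) (inj : forall i, L i -> C)
  (hC : is_coproduct k L C inj) (D : C -> Prop)
  (Dsup : forall S : C -> Prop, (forall x, S x -> D x) -> D (qsup S))
  (Dmul : forall a b, D a -> D b -> D (qmul a b))
  (Dinv : forall a, D a -> D (qinv a))
  (Dinj : forall i x, D (inj i x))
  (Dobj : match k with UnitalInv => forall e, is_unit C e -> D e | StrongInv => D (qtop C) end) :
  forall c, D c.
Proof.
  destruct hC as [hobj [hhom huniv]].
  set (Y := subQ C D Dsup Dmul Dinv).
  set (f := fun i x => exist D (inj i x) (Dinj i x) : Y).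
  assert (Hval_top : D (qtop C) -> proj1_sig (qtop Y) = qtop C).
  { intros Ht. simpl. apply qle_antisym.
    - apply qsup_ub; exact Logic.I.
    - apply qsup_ub. exists (exist D (qtop C) Ht : Y). split; [exact Logic.I | reflexivity]. }
  assert (Hobj : is_obj k Y /\ forall i, is_hom k (L i) Y (f i)).
  { destruct k; simpl in hobj |- *.
    - destruct hobj as [e0 He0].
      set (eY := exist D e0 (Dobj e0 He0) : Y).
      assert (HeY : is_unit Y eY).
      { intro a; split; apply sig_eq; simpl; apply He0. }
      split; [exists eY; exact HeY|]. intro i.
      destruct (hhom i) as [Hs [Hm [Hi Hu]]].
      split; [|split; [|split]].
      + intros S; apply sig_eq; simpl. rewrite Hs. apply sup_ext. intro y; split.
        * intros [x [Hx ->]]. exists (f i x); split; [exists x; auto | reflexivity].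
        * intros [z [[x [Hx ->]] ->]]. exists x; auto.
      + intros a b; apply sig_eq; simpl; apply Hm.
      + intros a; apply sig_eq; simpl; apply Hi.
      + intros ei e' Hei He'. apply sig_eq. simpl. rewrite (Hu ei e0 Hei He0).
        rewrite <- (unit_unique Y eY e' HeY He'). reflexivity.
    - split.
      + apply sig_eq. change (qmul (proj1_sig (qtop Y)) (proj1_sig (qtop Y)) = proj1_sig (qtop Y)). rewrite (Hval_top Dobj). exact hobj.
      + intro i. destruct (hhom i) as [Hs [Hm [Hi Hu]]].
        split; [|split; [|split]].
        * intros S; apply sig_eq; simpl. rewrite Hs. apply sup_ext. intro y; split.
          -- intros [x [Hx ->]]. exists (f i x); split; [exists x; auto | reflexivity].
          -- intros [z [[x [Hx ->]] ->]]. exists x; auto.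
        * intros a b; apply sig_eq; simpl; apply Hm.
        * intros a; apply sig_eq; simpl; apply Hi.
        * apply sig_eq. rewrite (Hval_top Dobj). simpl. exact Hu. }
  destruct Hobj as [HobjY HhomY].
  destruct (huniv Y f HobjY HhomY) as [h [Hh [Hhinj _]]].
  destruct (huniv C inj hobj hhom) as [h0 [_ [_ Huniq]]].
  set (h2 := fun c => proj1_sig (h c)).
  assert (Hid : is_hom k C C (fun c => c)).
  { split; [|split; [|split]].
    - intros S. apply sup_ext. intro y; split.
      + intros Hy; exists y; auto.
      + intros [x [Hx ->]]; auto.
    - reflexivity.
    - reflexivity.
    - destruct k; [intros; apply unit_unique; auto | reflexivity]. }
  assert (Hh2 : is_hom k C C h2).
  { destruct Hh as [Hs [Hm [Hi Hu]]].
    split; [|split; [|split]].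
    - intros S. unfold h2. rewrite Hs. simpl. apply sup_ext. intro y; split.
      + intros [z [[x [Hx ->]] ->]]. exists x; auto.
      + intros [x [Hx ->]]. exists (h x); split; [exists x; auto | reflexivity].
    - intros a b. unfold h2. rewrite Hm. reflexivity.
    - intros a. unfold h2. rewrite Hi. reflexivity.
    - destruct k; simpl in *.
      + intros e e' He He'. destruct HobjY as [eY HeY].
        unfold h2. rewrite (Hu e eY He HeY).
        set (eY' := exist D e' (Dobj _ He') : Y).
        assert (HeY' : is_unit Y eY').
        { intro a; split; apply sig_eq; simpl; apply He'. }
        rewrite (unit_unique Y eY eY' HeY HeY'). reflexivity.
      + unfold h2. rewrite Hu. apply Hval_top; exact Dobj. }
  intros c.
  assert (E1 := Huniq (fun c => c) Hid (fun i x => eq_refl) c).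
  assert (E2 := Huniq h2 Hh2 (fun i x => f_equal (@proj1_sig _ _) (Hhinj i x)) c).
  simpl in E1. rewrite <- E1 in E2. rewrite <- E2. unfold h2. exact (proj2_sig (h c)).
Qed.

Inductive Pg {I : Type} {L : I -> InvQuantale} (C : InvQuantale)
  (inj : forall i, L i -> C) (e : C) : C -> Prop :=
| Pg_e : Pg C inj e e
| Pg_g : forall i x, Pg C inj e (inj i x)
| Pg_m : forall a b, Pg C inj e a -> Pg C inj e b -> Pg C inj e (qmul a b).

Lemma mul_sup_le (Q : InvQuantale) (a b X : Q) (Sa Sb : Q -> Prop) :
  a = qsup Sa -> b = qsup Sb ->
  (forall p q, Sa p -> Sb q -> qle (qmul p q) X) -> qle (qmul a b) X.
Proof.
  intros -> -> H. rewrite qmul_supl. apply qsup_least. intros y [p [Hp ->]].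
  rewrite qmul_supr. apply qsup_least. intros z [q [Hq ->]]. auto.
Qed.

Lemma inv_sup_le (Q : InvQuantale) (a X : Q) (Sa : Q -> Prop) :
  a = qsup Sa -> (forall p, Sa p -> qle (qinv p) X) -> qle (qinv a) X.
Proof.
  intros -> H. rewrite qinv_sup. apply qsup_least. intros y [p [Hp ->]]. auto.
Qed.

Lemma sup_mul_e (Q : InvQuantale) (c e : Q) (S : Q -> Prop) :
  c = qsup S -> (forall p, S p -> qmul p e = p /\ qmul e p = p) ->
  qmul c e = c /\ qmul e c = c.
Proof.
  intros -> H. split.
  - rewrite qmul_supl. apply sup_ext. intro y; split.
    + intros [p [Hp ->]]. rewrite (proj1 (H p Hp)); auto.
    + intros Hy. exists y; split; auto. symmetry; apply H; auto.
  - rewrite qmul_supr. apply sup_ext. intro y; split.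
    + intros [p [Hp ->]]. rewrite (proj2 (H p Hp)); auto.
    + intros Hy. exists y; split; auto. symmetry; apply H; auto.
Qed.

Lemma sup_inv_id (Q : InvQuantale) (c : Q) (S : Q -> Prop) :
  c = qsup S -> (forall p, S p -> qinv p = p) -> qinv c = c.
Proof.
  intros -> H. rewrite qinv_sup. apply sup_ext. intro y; split.
  - intros [p [Hp ->]]. rewrite H; auto.
  - intros Hy. exists y; split; auto. symmetry; apply H; auto.
Qed.

Lemma core (I : Type) (L : I -> InvQuantale)
  (hL : forall i, is_locale (L i))
  (hreg : forall i j : I, i <> j -> regular (L i) \/ regular (L j))
  (C : InvQuantale) (inj : forall i, L i -> C) (e : C)
  (hsup : forall i S, inj i (qsup S) = qsup (img (inj i) S))
  (hmul : forall i a b, inj i (qmul a b) = qmul (inj i a) (inj i b))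
  (hinv : forall i a, inj i (qinv a) = qinv (inj i a))
  (He1 : forall i, inj i (qtop (L i)) = e)
  (He2 : qmul e e = e) (He3 : qinv e = e)
  (Hg : forall i x, qle (inj i x) e /\ qmul (inj i x) e = inj i x /\ qmul e (inj i x) = inj i x)
  (Hgen : forall D : C -> Prop,
     (forall S : C -> Prop, (forall x, S x -> D x) -> D (qsup S)) ->
     (forall a b, D a -> D b -> D (qmul a b)) ->
     (forall a, D a -> D (qinv a)) ->
     (forall i x, D (inj i x)) -> D e -> forall c, D c) :
  is_locale C.
Proof.
  assert (Hcr : forall i, regular (L i) -> forall a X, qle X e -> qmul X e = X -> qmul e X = X ->
            qmul (inj i a) X = qmul X (inj i a)).
  { intros i Hr a X HX HXe HeX.
    set (W := fun a' => well_inside a' a).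
    assert (Ea : a = qsup W) by apply Hr.
    assert (Haux : forall a', W a' -> qle (qmul (inj i a') X) (qmul X (inj i a)) /\
                                      qle (qmul X (inj i a')) (qmul (inj i a) X)).
    { intros a' [b [Hab Hjoin]].
      destruct (Hg i a') as [Hu1 [Hu2 Hu3]]. destruct (Hg i b) as [Hv1 [Hv2 Hv3]].
      apply (comm_aux C e (inj i a') (inj i b) (inj i a) X); auto.
      - rewrite <- hmul, (proj1 (hL i)), Hab. apply hom_bot; auto.
      - rewrite <- hmul, (proj1 (hL i)), meet_comm, Hab. apply hom_bot; auto.
      - rewrite <- hom_join by auto. rewrite Hjoin. apply He1. }
    apply qle_antisym.
    - rewrite Ea at 1. rewrite hsup, qmul_supl. apply qsup_least.
      intros y [z [[a' [HW ->]] ->]]. apply Haux; auto.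
    - rewrite Ea at 1. rewrite hsup, qmul_supr. apply qsup_least.
      intros y [z [[a' [HW ->]] ->]]. apply Haux; auto. }
  assert (Hgc : forall i a j y, qmul (inj i a) (inj j y) = qmul (inj j y) (inj i a)).
  { intros i a j y. destruct (classic (i = j)) as [<- | Hij].
    - rewrite <- !hmul, !(proj1 (hL i)), meet_comm. reflexivity.
    - destruct (Hg j y) as [Hy1 [Hy2 Hy3]]. destruct (Hg i a) as [Ha1 [Ha2 Ha3]].
      destruct (hreg i j Hij) as [Hr | Hr].
      + apply Hcr; auto.
      + symmetry; apply Hcr; auto. }
  set (P := Pg C inj e).
  assert (G1 : forall p, P p -> qle p e /\ qmul p e = p /\ qmul e p = p).
  { intros p Hp; induction Hp as [| i x | a b Ha [Ha1 [Ha2 Ha3]] Hb [Hb1 [Hb2 Hb3]]].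
    - split; [apply qle_refl | auto].
    - apply Hg.
    - split; [|split].
      + eapply qle_trans; [apply mul_monol; exact Ha1 | rewrite Hb3; exact Hb1].
      + rewrite <- qmul_assoc, Hb2; reflexivity.
      + rewrite qmul_assoc, Ha3; reflexivity. }
  assert (HA : forall p, P p -> forall i x, qmul p (inj i x) = qmul (inj i x) p).
  { intros p Hp; induction Hp as [| j y | a b Ha IHa Hb IHb]; intros i x.
    - destruct (Hg i x) as [_ [H1 H2]]. rewrite H1, H2; reflexivity.
    - apply Hgc.
    - rewrite <- (qmul_assoc C a b), IHb, (qmul_assoc C a), IHa, <- qmul_assoc. reflexivity. }
  assert (HB : forall p, P p -> forall q, P q -> qmul p q = qmul q p).
  { intros p Hp; induction Hp as [| j y | a b Ha IHa Hb IHb]; intros q Hq.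
    - destruct (G1 q Hq) as [_ [H1 H2]]. rewrite H1, H2; reflexivity.
    - symmetry; apply HA; auto.
    - rewrite <- (qmul_assoc C a b), (IHb q Hq), (qmul_assoc C a), (IHa q Hq), <- qmul_assoc. reflexivity. }
  assert (G2 : forall p, P p -> qinv p = p /\ qmul p p = p).
  { intros p Hp; induction Hp as [| i x | a b Ha [Ha1 Ha2] Hb [Hb1 Hb2]].
    - auto.
    - split.
      + rewrite <- hinv, (proj2 (hL i)). reflexivity.
      + rewrite <- hmul, (proj1 (hL i)), meet_idem. reflexivity.
    - split.
      + rewrite qinv_mul, Ha1, Hb1. symmetry; apply HB; auto.
      + rewrite <- (qmul_assoc C a b), (qmul_assoc C b a b), <- (HB a Ha b Hb),
          <- (qmul_assoc C a b b), Hb2, (qmul_assoc C a a b), Ha2. reflexivity. }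
  set (D := fun c => c = qsup (fun p => P p /\ qle p c)).
  assert (DP : forall p, P p -> D p).
  { intros p Hp. unfold D. apply qle_antisym.
    - apply qsup_ub. split; auto using qle_refl.
    - apply qsup_least. intros x [_ H]; exact H. }
  assert (Hall : forall c, D c).
  { apply Hgen.
    - intros S HS. unfold D. apply qle_antisym.
      + apply qsup_least. intros a Ha. pose proof (HS a Ha) as Ea. unfold D in Ea. rewrite Ea at 1.
        apply qsup_least. intros p [Hp Hpa]. apply qsup_ub. split; auto.
        eapply qle_trans; [exact Hpa | apply qsup_ub; exact Ha].
      + apply qsup_least. intros x [_ H]; exact H.
    - intros a b Ha Hb. unfold D. apply qle_antisym.
      + apply (mul_sup_le C a b _ _ _ Ha Hb). intros p q [Hp Hpa] [Hq Hqb].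
        apply qsup_ub. split.
        * apply Pg_m; auto.
        * eapply qle_trans; [apply mul_monol; exact Hpa | apply mul_monor; exact Hqb].
      + apply qsup_least. intros x [_ H]; exact H.
    - intros a Ha. unfold D. apply qle_antisym.
      + apply (inv_sup_le C a _ _ Ha). intros p [Hp Hpa]. apply qsup_ub.
        rewrite (proj1 (G2 p Hp)). split; auto.
        rewrite <- (proj1 (G2 p Hp)). apply inv_mono; auto.
      + apply qsup_least. intros x [_ H]; exact H.
    - intros i x. apply DP. apply Pg_g.
    - apply DP. apply Pg_e. }
  unfold D in Hall.
  assert (Hce : forall c, qmul c e = c /\ qmul e c = c).
  { intros c. apply (sup_mul_e C c e _ (Hall c)). intros p [Hp _]. apply G1; auto. }
  assert (Hcle : forall c, qle c e).
  { intros c. rewrite (Hall c). apply qsup_least. intros p [Hp _]. apply G1; auto. }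
  assert (Hidem : forall c : C, qmul c c = c).
  { intros c. apply qle_antisym.
    - eapply qle_trans; [apply mul_monor; apply Hcle | rewrite (proj1 (Hce c)); apply qle_refl].
    - rewrite (Hall c) at 1. apply qsup_least. intros p [Hp Hpc].
      rewrite <- (proj2 (G2 p Hp)).
      eapply qle_trans; [apply mul_monol; exact Hpc | apply mul_monor; exact Hpc]. }
  split.
  - intros a b. apply qle_antisym.
    + apply qsup_ub. split.
      * eapply qle_trans; [apply mul_monor; apply Hcle | rewrite (proj1 (Hce a)); apply qle_refl].
      * eapply qle_trans; [apply mul_monol; apply Hcle | rewrite (proj2 (Hce b)); apply qle_refl].
    + apply qsup_least. intros x [Hxa Hxb]. rewrite <- (Hidem x).
      eapply qle_trans; [apply mul_monol; exact Hxa | apply mul_monor; exact Hxb].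
  - intros c. apply (sup_inv_id C c _ (Hall c)). intros p [Hp _]. apply G2; auto.
Qed.

Theorem lemma4p3 (k : qkind) (I : Type) (L : I -> InvQuantale)
  (hL : forall i, is_locale (L i))
  (hreg : forall i j : I, i <> j -> regular (L i) \/ regular (L j))
  (C : InvQuantale) (inj : forall i, L i -> C)
  (hC : is_coproduct k L C inj) :
  is_locale C.
Proof.
  pose proof hC as hC'. destruct hC' as [hobj [hhom _]].
  assert (hsup : forall i S, inj i (qsup S) = qsup (img (inj i) S)) by (intros i; apply (hhom i)).
  assert (hmul : forall i a b, inj i (qmul a b) = qmul (inj i a) (inj i b)) by (intros i; apply (hhom i)).
  assert (hinv : forall i a, inj i (qinv a) = qinv (inj i a)) by (intros i; apply (hhom i)).
  destruct k.
  - destruct hobj as [e He].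
    assert (He1 : forall i, inj i (qtop (L i)) = e).
    { intros i. destruct (hhom i) as [_ [_ [_ Hu]]]. apply Hu; auto. apply locale_top_unit; auto. }
    apply (core I L hL hreg C inj e hsup hmul hinv He1).
    + apply He.
    + apply unit_inv; auto.
    + intros i x. split; [|split; apply He].
      rewrite <- (He1 i). apply hom_mono; auto. apply qsup_ub; exact Logic.I.
    + intros D Ds Dm Di Dj De. apply (generation UnitalInv I L C inj hC D Ds Dm Di Dj).
      simpl. intros e' He'. rewrite <- (unit_unique C e e' He He'). exact De.
  - assert (He1 : forall i, inj i (qtop (L i)) = qtop C).
    { intros i. destruct (hhom i) as [_ [_ [_ Hu]]]. exact Hu. }
    apply (core I L hL hreg C inj (qtop C) hsup hmul hinv He1).
    + exact hobj.
    + apply top_inv.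
    + intros i x. split; [apply qsup_ub; exact Logic.I|].
      rewrite <- (He1 i), <- !hmul, !(proj1 (hL i)), meet_top_r, meet_comm, meet_top_r. auto.
    + intros D Ds Dm Di Dj De. apply (generation StrongInv I L C inj hC D Ds Dm Di Dj).
      exact De.
Qed.
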